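(* Let $r,s,n$ be positive integers. If $P$ is a valid lattice path from $(0,0)$ to $(nr,ns)$, then $P$ is northwest of the staircase $S$, the path from $(0,0)$ to $(nr,ns)$ with step sequence $(E^rN^s)^n$.
   Context: A lattice path is a path in $\mathbb{Z}^2$ consisting of unit steps north ($N$-steps, adding $(0,1)$) and east ($E$-steps, adding $(1,0)$). For fixed positive integers $r,s$, points $v,w\in\mathbb{Z}^2$ are equivalent if $v-w=\ell(r,s)$ for some $\ell\in\mathbb{Z}$; $[v]$ denotes the class of $v$. A lattice path $P$ is valid if whenever $P$ enters a point $v$ with an $E$-step, every later point of $P$ in $[v]$ is also entered by an $E$-step. A path $P$ is northwest of a path $Q$ if for every vertex $(x,y)$ of $P$ there is a vertex $(x',y')$ of $Q$ with $x\le x'$ and $y\ge y'$. *)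

(* Defs.v *)
From mathcomp Require Import all_boot all_order all_algebra.
Set Implicit Arguments. Unset Strict Implicit. Unset Printing Implicit Defensive.
Import Order.TTheory GRing.Theory Num.Theory.
Local Open Scope ring_scope.

(* A lattice path starting at (0,0) is encoded by its step sequence:
   [true] = E-step (adds (1,0)), [false] = N-step (adds (0,1)). *)
Definition E_step : bool := true.
Definition N_step : bool := false.

Definition vert (p : seq bool) (i : nat) : int * int :=
  ((count (fun b => b == E_step) (take i p))%:Z,
   (count (fun b => b == N_step) (take i p))%:Z).

Definition ends_at (p : seq bool) (a b : nat) : Prop :=
  count (fun b => b == E_step) p = a /\ count (fun b => b == N_step) p = b.

Definition equiv_rs (r s : nat) (v w : int * int) : Prop :=
  exists l : int, (v.1 - w.1 = l * r%:Z)%R /\ (v.2 - w.2 = l * s%:Z)%R.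

(* Vertex i (1 <= i <= size p) is entered by step number i, i.e. nth _ p i.-1. *)
Definition entered_by_E (p : seq bool) (i : nat) : Prop :=
  nth N_step p i.-1 = E_step.

Definition valid (r s : nat) (p : seq bool) : Prop :=
  forall i j : nat, (1 <= i)%N -> (i < j)%N -> (j <= size p)%N ->
    entered_by_E p i -> equiv_rs r s (vert p j) (vert p i) ->
    entered_by_E p j.

Definition northwest (p q : seq bool) : Prop :=
  forall i : nat, (i <= size p)%N ->
    exists j : nat, (j <= size q)%N /\
      ((vert p i).1 <= (vert q j).1)%R /\ ((vert q j).2 <= (vert p i).2)%R.

Definition staircase (r s n : nat) : seq bool :=
  flatten (nseq n (nseq r E_step ++ nseq s N_step)).

(* Main.v *)
Require Import Defs.
From mathcomp Require Import all_boot all_order all_algebra.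
From mathcomp Require Import zify.

Definition XX (p : seq bool) t := count (fun b => b == E_step) (take t p).
Definition YY (p : seq bool) t := count (fun b => b == N_step) (take t p).

Lemma cEN (s : seq bool) :
  count (fun b => b == E_step) s + count (fun b => b == N_step) s = size s.
Proof. elim: s => //= -[] s IH /=; rewrite /E_step /N_step /= in IH *; lia. Qed.

Lemma XY p t : t <= size p -> XX p t + YY p t = t.
Proof. move=> ht; rewrite /XX /YY cEN size_take_min; lia. Qed.

Lemma take_step (p : seq bool) t : t < size p ->
  XX p t.+1 = XX p t + (nth N_step p t == E_step).
Proof.
move=> ht; rewrite /XX (take_nth N_step ht) -cats1 count_cat /=.
by case: (nth N_step p t).
Qed.

Lemma XX_le (p : seq bool) t : XX p t <= t.
Proof.
have := cEN (take t p); rewrite size_take_min -/(XX p t); lia.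
Qed.

Lemma XX_mono (p : seq bool) t u : t <= u -> XX p t <= XX p u.
Proof.
move=> htu; rewrite /XX -(subnKC htu) takeD count_cat; lia.
Qed.

Lemma XX_lip (p : seq bool) t u : t <= u -> XX p u <= XX p t + (u - t).
Proof.
move=> htu; rewrite {1}/XX -(subnKC htu) takeD count_cat -/(XX p t).
have := XX_le (drop t p) (u - t). rewrite /XX. lia.
Qed.
Lemma vertE p t : vert p t = (Posz (XX p t), Posz (YY p t)).
Proof. by []. Qed.

Section Main.
Variables (r s n : nat) (P : seq bool).
Hypothesis (hr : 0 < r) (hs : 0 < s).
Hypothesis hsize : size P = n * (r + s).
Hypothesis hv : valid r s P.

Lemma Per m : m + (r + s) < size P -> XX P (m + (r + s)) >= XX P m + r + 1 ->
  XX P (m + 1 + (r + s)) >= XX P (m + 1) + r + 1.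
Proof.
move=> hm hD.
have ha := @take_step P m (ltac:(lia) : m < size P).
have hb := @take_step P (m + (r + s)) hm.
have -> : m + 1 + (r + s) = (m + (r + s)).+1 by lia.
have -> : m + 1 = m.+1 by lia.
rewrite ha hb.
case Ea: (nth N_step P m); case Eb: (nth N_step P (m + (r + s))) => /=; try lia.
case: (leqP (XX P m + r + 2) (XX P (m + (r + s)))) => hc; first lia.
exfalso.
have H := hv (m.+1) ((m + (r + s)).+1).
suff : entered_by_E P (m + (r + s)).+1 by rewrite /entered_by_E /= Eb.
apply: H; [lia|lia|lia|by rewrite /entered_by_E /= Ea|].
exists 1%R; rewrite !vertE /=.
have e1 := XY P m.+1 (ltac:(lia) : m.+1 <= size P).
have e2 := XY P (m + (r + s)).+1 (ltac:(lia) : (m + (r + s)).+1 <= size P).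
rewrite ha hb Ea Eb /= in e1 e2 *.
split; lia.
Qed.

Lemma Per_iter m k : m + k + (r + s) <= size P ->
  XX P (m + (r + s)) >= XX P m + r + 1 ->
  XX P (m + k + (r + s)) >= XX P (m + k) + r + 1.
Proof.
move=> hk hD; elim: k hk => [|k IH] hk; first by rewrite addn0.
have := Per (m + k) (ltac:(lia)) (IH (ltac:(lia))).
by have -> : m + k.+1 = m + k + 1 by lia.
Qed.

Hypothesis hend : count (fun b => b == E_step) P = n * r.

Lemma XX_end : XX P (n * (r + s)) = n * r.
Proof. by rewrite /XX -hsize take_size. Qed.

Lemma mult i : i <= n -> XX P (i * (r + s)) <= i * r.
Proof.
elim: i => [|i IH] hi; first by rewrite mul0n /XX take0.
case: (leqP (XX P (i.+1 * (r + s))) (i.+1 * r)) => // hbad; exfalso.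
have hD : XX P (i * (r + s) + (r + s)) >= XX P (i * (r + s)) + r + 1.
  have := IH (ltac:(lia)). rewrite mulSnr in hbad. rewrite mulSnr in hbad. lia.
have key : forall j, i.+1 + j <= n ->
    XX P ((i.+1 + j) * (r + s)) >= (i.+1 + j) * r + 1.
  elim => [|j IHj] hj; first by rewrite addn0; lia.
  have := Per_iter (i * (r + s)) ((j.+1) * (r + s)) (ltac:(rewrite hsize; nia)) hD.
  have -> : i * (r + s) + j.+1 * (r + s) = (i.+1 + j) * (r + s) by nia.
  have -> : (i.+1 + j) * (r + s) + (r + s) = (i.+1 + j.+1) * (r + s) by nia.
  have := IHj (ltac:(lia)). nia.
have := key (n - i.+1) (ltac:(lia)).
have -> : i.+1 + (n - i.+1) = n by lia.
rewrite XX_end; lia.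
Qed.

End Main.

Lemma count_flat (f : pred bool) (blk : seq bool) i :
  count f (flatten (nseq i blk)) = i * count f blk.
Proof. elim: i => //= i IH; rewrite count_cat IH mulSn. done. Qed.

Lemma size_flat (blk : seq bool) i :
  size (flatten (nseq i blk)) = i * size blk.
Proof. elim: i => //= i IH; rewrite size_cat IH mulSn. done. Qed.

Lemma size_stair r s n : size (staircase r s n) = n * (r + s).
Proof. by rewrite /staircase size_flat size_cat !size_nseq. Qed.

Lemma stair_take r s n i a : i <= n -> a <= r -> (i < n \/ a = 0) ->
  XX (staircase r s n) (i * (r + s) + a) = i * r + a /\
  YY (staircase r s n) (i * (r + s) + a) = i * s.
Proof.
move=> hi ha hor.
rewrite /XX /YY /staircase -(subnKC hi) nseqD flatten_cat.
have hsz : size (flatten (nseq i (nseq r E_step ++ nseq s N_step))) = i * (r + s).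
  by rewrite size_flat size_cat !size_nseq.
rewrite takeD take_size_cat // drop_size_cat // !count_cat !count_flat !count_cat !count_nseq.
have -> : take a (flatten (nseq (n - i) (nseq r E_step ++ nseq s N_step))) = nseq a E_step.
  case: hor => [hlt|->]; last by rewrite take0.
  have -> : n - i = (n - i).-1.+1 by lia.
  rewrite /= -(subnKC ha) nseqD -!catA take_size_cat // size_nseq //.
rewrite !count_nseq /E_step /N_step /=; split; lia.
Qed.

Theorem mainTheorem4 (r s n : nat) (P : seq bool) :
  (0 < r)%N -> (0 < s)%N -> (0 < n)%N ->
  ends_at P (n * r) (n * s) -> valid r s P ->
  northwest P (staircase r s n).
Proof.
move=> hr hs hn [hE hN] hv t ht.
have hsize : size P = n * (r + s) by rewrite -cEN hE hN; lia.
have hmult : forall i, i <= n -> XX P (i * (r + s)) <= i * r.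
  by move=> i hi; exact: (@mult r s n P hr hs hsize hv hE i hi).
set L := r + s.
have hL : 0 < L by lia.
have ht' := divn_eq t L.
have hrho := ltn_pmod t hL.
set i := t %/ L in ht' *; set rho := t %% L in ht' hrho *.
have hin : i <= n by rewrite hsize in ht; nia.
have hXY := XY P t ht.
case: (leqP rho r) => hrr.
- have hor : i < n \/ rho = 0.
    case: (ltnP i n) => hi; [by left | right]; rewrite hsize in ht; nia.
  have [e1 e2] := @stair_take r s n i rho hin hrr hor.
  exists (i * (r + s) + rho); split.
    rewrite size_stair; case: hor => [h|->]; nia.
  rewrite !vertE /= e1 e2 !lez_nat.
  have := XX_lip P (i * L) t (ltac:(nia)).
  have := hmult i hin.
  rewrite /L in ht' *. split; nia.
- have hi : i < n by rewrite hsize in ht; nia.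
  have [e1 e2] := @stair_take r s n i r hin (leqnn r) (or_introl hi).
  exists (i * (r + s) + r); split.
    rewrite size_stair; nia.
  rewrite !vertE /= e1 e2 !lez_nat.
  have := XX_mono P t (i.+1 * L) (ltac:(nia)).
  have := hmult i.+1 hi.
  rewrite /L in ht' *. split; nia.
Qed.
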